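(* For all terms $t,s$ of the distributive $\lambda$-calculus, if $t\to_{\mathsf{dist}}^* s$ and $s$ is a $\to_{\mathsf{dist}}$-normal form, then $t\to_{LO}^* s$.
   Context: Terms of the distributive $\lambda$-calculus are given by the grammar $t,s,u ::= x \mid \lambda x.t \mid ts \mid \langle t,s\rangle \mid \pi_1 t \mid \pi_2 t$, considered up to $\alpha$-renaming; $t\{x:=s\}$ denotes capture-avoiding substitution. The top-level rules are: $(\lambda x.t)s \mapsto_\beta t\{x:=s\}$; $\pi_i\langle t_1,t_2\rangle \mapsto_{\pi_i} t_i$ for $i=1,2$; $\langle t,s\rangle u \mapsto_{@_\times} \langle tu, su\rangle$; $\pi_i(\lambda x.t)\mapsto_{\pi_\lambda} \lambda x.\pi_i t$ for $i=1,2$. The relation $\to_{\mathsf{dist}}$ is the closure of the union of these rules under all term constructors; $\to^*$ denotes reflexive-transitive closure; a normal form is a term with no $\to_{\mathsf{dist}}$-reduct. A term is neutral if it is a variable, an application $ts$, or a projection $\pi_i t$. Leftmost-outermost reduction $\to_{LO}$ is the smallest relation closed under the rules: $(\lambda x.t)s\to_{LO} t\{x:=s\}$; $\pi_i\langle t_1,t_2\rangle\to_{LO} t_i$ ($i=1,2$); $\langle t,s\rangle u\to_{LO}\langle tu,su\rangle$; $\pi_i(\lambda x.t)\to_{LO}\lambda x.\pi_i t$ ($i=1,2$); if $t\to_{LO}s$ and $t$ is neutral then $tu\to_{LO}su$; if $t\to_{LO}s$ then $\lambda x.t\to_{LO}\lambda x.s$; if $u$ is neutral and normal and $t\to_{LO}s$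 then $ut\to_{LO}us$; if $t\to_{LO}s$ then $\pi_i t\to_{LO}\pi_i s$; if $t\to_{LO}s$ then $\langle t,u\rangle\to_{LO}\langle s,u\rangle$; if $u$ is normal and $t\to_{LO}s$ then $\langle u,t\rangle\to_{LO}\langle u,s\rangle$. *)

(* Defs.v *)
From Stdlib Require Import Arith Relations.

Inductive term : Type :=
| Var : nat -> term
| Lam : term -> term                 (* \x. t, x is index 0 in t *)
| App : term -> term -> term
| Pair : term -> term -> term
| Proj : bool -> term -> term.       (* Proj true = pi_1, Proj false = pi_2 *)

Fixpoint lift (k : nat) (t : term) : term :=
  match t with
  | Var n => if Nat.ltb n k then Var n else Var (S n)
  | Lam t => Lam (lift (S k) t)
  | App t u => App (lift k t) (lift k u)
  | Pair t u => Pair (lift k t) (lift k u)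
  | Proj b t => Proj b (lift k t)
  end.

(* subst k s t : capture-avoiding substitution of s for index k in t,
   decrementing indices > k (the binder is removed). *)
Fixpoint subst (k : nat) (s : term) (t : term) : term :=
  match t with
  | Var n =>
      match Nat.compare n k with
      | Lt => Var n
      | Eq => s
      | Gt => Var (pred n)
      end
  | Lam t => Lam (subst (S k) (lift 0 s) t)
  | App t u => App (subst k s t) (subst k s u)
  | Pair t u => Pair (subst k s t) (subst k s u)
  | Proj b t => Proj b (subst k s t)
  end.

(* t{x:=s} where x is the variable bound by the enclosing lambda *)
Definition subst0 (s t : term) : term := subst 0 s t.

Inductive top_step : term -> term -> Prop :=
| top_beta : forall t s, top_step (App (Lam t) s) (subst0 s t)
| top_pi1 : forall t1 t2, top_step (Proj true (Pair t1 t2)) t1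
| top_pi2 : forall t1 t2, top_step (Proj false (Pair t1 t2)) t2
| top_app_pair : forall t s u, top_step (App (Pair t s) u) (Pair (App t u) (App s u))
| top_pi_lam : forall b t, top_step (Proj b (Lam t)) (Lam (Proj b t)).

Inductive dist_step : term -> term -> Prop :=
| ds_top : forall t s, top_step t s -> dist_step t s
| ds_lam : forall t t', dist_step t t' -> dist_step (Lam t) (Lam t')
| ds_appl : forall t t' u, dist_step t t' -> dist_step (App t u) (App t' u)
| ds_appr : forall t u u', dist_step u u' -> dist_step (App t u) (App t u')
| ds_pairl : forall t t' u, dist_step t t' -> dist_step (Pair t u) (Pair t' u)
| ds_pairr : forall t u u', dist_step u u' -> dist_step (Pair t u) (Pair t u')
| ds_proj : forall b t t', dist_step t t' -> dist_step (Proj b t) (Proj b t').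

Definition normal (t : term) : Prop := forall s, ~ dist_step t s.

Definition neutral (t : term) : Prop :=
  match t with
  | Var _ | App _ _ | Proj _ _ => True
  | _ => False
  end.

Inductive lo_step : term -> term -> Prop :=
| lo_beta : forall t s, lo_step (App (Lam t) s) (subst0 s t)
| lo_pi1 : forall t1 t2, lo_step (Proj true (Pair t1 t2)) t1
| lo_pi2 : forall t1 t2, lo_step (Proj false (Pair t1 t2)) t2
| lo_app_pair : forall t s u, lo_step (App (Pair t s) u) (Pair (App t u) (App s u))
| lo_pi_lam : forall b t, lo_step (Proj b (Lam t)) (Lam (Proj b t))
| lo_appl : forall t s u, lo_step t s -> neutral t -> lo_step (App t u) (App s u)
| lo_lam : forall t s, lo_step t s -> lo_step (Lam t) (Lam s)
| lo_appr : forall u t s, neutral u -> normal u -> lo_step t s -> lo_step (App u t) (App u s)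
| lo_proj : forall b t s, lo_step t s -> lo_step (Proj b t) (Proj b s)
| lo_pairl : forall t s u, lo_step t s -> lo_step (Pair t u) (Pair s u)
| lo_pairr : forall u t s, normal u -> lo_step t s -> lo_step (Pair u t) (Pair u s).

Definition dist_star := clos_refl_trans term dist_step.
Definition lo_star := clos_refl_trans term lo_step.

(* Main.v *)
Require Import Defs.
From Stdlib Require Import Relations.
From Stdlib Require Import Arith Lia.

Ltac dbsolve := repeat (cbn [lift subst] in *; match goal with
 | |- context [Nat.ltb ?a ?b] => destruct (Nat.ltb_spec a b)
 | |- context [Nat.compare ?a ?b] => destruct (Nat.compare_spec a b)
 end); try lia; try reflexivity; try (f_equal; lia).

Lemma lift_lift : forall t k j, k <= j -> lift k (lift j t) = lift (S j) (lift k t).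
Proof.
  induction t; intros k j H; simpl; try (f_equal; auto; fail).
  - dbsolve.
  - f_equal; apply IHt; lia.
Qed.

Lemma lift_subst_le : forall t k j s, k <= j ->
  lift k (subst j s t) = subst (S j) (lift k s) (lift k t).
Proof.
  induction t; intros k j s H; simpl; try (f_equal; auto; fail).
  - dbsolve.
  - f_equal. rewrite IHt by lia. f_equal. rewrite (lift_lift s 0 k) by lia. reflexivity.
Qed.

Lemma lift_subst_ge : forall t k j s, j <= k ->
  lift k (subst j s t) = subst j (lift k s) (lift (S k) t).
Proof.
  induction t; intros k j s H; simpl; try (f_equal; auto; fail).
  - dbsolve.
  - f_equal. rewrite IHt by lia. f_equal. rewrite (lift_lift s 0 k) by lia. reflexivity.
Qed.

Lemma subst_lift : forall t k s, subst k s (lift k t) = t.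
Proof.
  induction t; intros k s; simpl; try (f_equal; auto; fail).
  dbsolve.
Qed.

Lemma subst_subst : forall t j k s u, j <= k ->
  subst k s (subst j u t) = subst j (subst k s u) (subst (S k) (lift j s) t).
Proof.
  induction t; intros j k s u H; simpl; try (f_equal; auto; fail).
  - dbsolve. rewrite subst_lift. reflexivity.
  - f_equal. rewrite IHt by lia. f_equal.
    + rewrite lift_subst_le by lia. reflexivity.
    + rewrite (lift_lift s 0 j) by lia. reflexivity.
Qed.

Inductive par : term -> term -> Prop :=
| par_var : forall n, par (Var n) (Var n)
| par_lam : forall t t', par t t' -> par (Lam t) (Lam t')
| par_app : forall t t' u u', par t t' -> par u u' -> par (App t u) (App t' u')
| par_pair : forall t t' u u', par t t' -> par u u' -> par (Pair t u) (Pair t' u')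
| par_proj : forall b t t', par t t' -> par (Proj b t) (Proj b t')
| par_beta : forall t t' u u', par t t' -> par u u' -> par (App (Lam t) u) (subst0 u' t')
| par_pi1 : forall t1 t1' t2, par t1 t1' -> par (Proj true (Pair t1 t2)) t1'
| par_pi2 : forall t1 t2 t2', par t2 t2' -> par (Proj false (Pair t1 t2)) t2'
| par_app_pair : forall t t' s s' u u', par t t' -> par s s' -> par u u' ->
    par (App (Pair t s) u) (Pair (App t' u') (App s' u'))
| par_pi_lam : forall b t t', par t t' -> par (Proj b (Lam t)) (Lam (Proj b t')).

Inductive ipar : term -> term -> Prop :=
| ipar_var : forall n, ipar (Var n) (Var n)
| ipar_lam : forall t t', par t t' -> ipar (Lam t) (Lam t')
| ipar_pair : forall t t' u u', par t t' -> par u u' -> ipar (Pair t u) (Pair t' u')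
| ipar_app : forall t t' u u', ipar t t' -> par u u' -> ipar (App t u) (App t' u')
| ipar_proj : forall b t t', ipar t t' -> ipar (Proj b t) (Proj b t').

Inductive h : term -> term -> Prop :=
| h_top : forall t s, top_step t s -> h t s
| h_app : forall t t' u, h t t' -> h (App t u) (App t' u)
| h_proj : forall b t t', h t t' -> h (Proj b t) (Proj b t').

Definition hs := clos_refl_trans term h.

Inductive ist : term -> term -> Prop :=
| ist_var : forall n, ist (Var n) (Var n)
| ist_lam : forall a b, dist_star a b -> ist (Lam a) (Lam b)
| ist_pair : forall a1 b1 a2 b2, dist_star a1 b1 -> dist_star a2 b2 -> ist (Pair a1 a2) (Pair b1 b2)
| ist_app : forall a1 b1 a2 b2, ist a1 b1 -> dist_star a2 b2 -> ist (App a1 a2) (App b1 b2)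
| ist_proj : forall c a b, ist a b -> ist (Proj c a) (Proj c b).

Lemma par_refl : forall t, par t t.
Proof. induction t; constructor; auto. Qed.

Lemma ipar_par : forall a b, ipar a b -> par a b.
Proof. induction 1; constructor; auto. Qed.

Lemma par_lift : forall t t', par t t' -> forall k, par (lift k t) (lift k t').
Proof.
  induction 1; intros k; simpl; try (constructor; auto; fail).
  - apply par_refl.
  - unfold subst0. rewrite lift_subst_ge by lia. constructor; auto.
Qed.

Lemma par_subst : forall t t', par t t' -> forall k N N', par N N' ->
  par (subst k N t) (subst k N' t').
Proof.
  induction 1; intros k N N' HN; simpl; try (constructor; auto using par_lift; fail).
  - destruct (Nat.compare n k); auto using par_refl.
  - unfold subst0. rewrite subst_subst by lia. simpl.
    constructor; auto using par_lift.
Qed.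

Lemma ds_star_lam : forall a b, dist_star a b -> dist_star (Lam a) (Lam b).
Proof. induction 1; [apply rt_step; apply ds_lam; auto | apply rt_refl | eapply rt_trans; eauto]. Qed.
Lemma ds_star_appl : forall a b c, dist_star a b -> dist_star (App a c) (App b c).
Proof. induction 1; [apply rt_step; apply ds_appl; auto | apply rt_refl | eapply rt_trans; eauto]. Qed.
Lemma ds_star_appr : forall a b c, dist_star a b -> dist_star (App c a) (App c b).
Proof. induction 1; [apply rt_step; apply ds_appr; auto | apply rt_refl | eapply rt_trans; eauto]. Qed.
Lemma ds_star_pairl : forall a b c, dist_star a b -> dist_star (Pair a c) (Pair b c).
Proof. induction 1; [apply rt_step; apply ds_pairl; auto | apply rt_refl | eapply rt_trans; eauto]. Qed.
Lemma ds_star_pairr : forall a b c, dist_star a b -> dist_star (Pair c a) (Pair c b).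
Proof. induction 1; [apply rt_step; apply ds_pairr; auto | apply rt_refl | eapply rt_trans; eauto]. Qed.
Lemma ds_star_proj : forall c a b, dist_star a b -> dist_star (Proj c a) (Proj c b).
Proof. induction 1; [apply rt_step; apply ds_proj; auto | apply rt_refl | eapply rt_trans; eauto]. Qed.

Lemma ds_top_star : forall a b, top_step a b -> dist_star a b.
Proof. intros; apply rt_step; constructor; auto. Qed.

Lemma par_dist : forall a b, par a b -> dist_star a b.
Proof.
  induction 1.
  - apply rt_refl.
  - apply ds_star_lam; auto.
  - eapply rt_trans; [apply ds_star_appl; eauto | apply ds_star_appr; eauto].
  - eapply rt_trans; [apply ds_star_pairl; eauto | apply ds_star_pairr; eauto].
  - apply ds_star_proj; auto.
  - eapply rt_trans; [apply ds_star_appl, ds_star_lam; eauto|].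
    eapply rt_trans; [apply ds_star_appr; eauto|].
    apply ds_top_star; constructor.
  - eapply rt_trans; [apply ds_top_star; constructor | auto].
  - eapply rt_trans; [apply ds_top_star; constructor | auto].
  - eapply rt_trans; [apply ds_top_star; constructor |].
    eapply rt_trans; [apply ds_star_pairl, ds_star_appl; eauto|].
    eapply rt_trans; [apply ds_star_pairl, ds_star_appr; eauto|].
    eapply rt_trans; [apply ds_star_pairr, ds_star_appl; eauto|].
    apply ds_star_pairr, ds_star_appr; eauto.
  - eapply rt_trans; [apply ds_top_star; constructor |].
    apply ds_star_lam, ds_star_proj; auto.
Qed.

Lemma dist_par : forall a b, dist_step a b -> par a b.
Proof.
  induction 1.
  1: destruct H; [apply par_beta|apply par_pi1|apply par_pi2|apply par_app_pair|apply par_pi_lam]; apply par_refl.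
  all: constructor; auto using par_refl.
Qed.

Lemma ist_dist : forall a b, ist a b -> dist_star a b.
Proof.
  induction 1.
  - apply rt_refl.
  - apply ds_star_lam; auto.
  - eapply rt_trans; [apply ds_star_pairl; eauto | apply ds_star_pairr; eauto].
  - eapply rt_trans; [apply ds_star_appl; eauto | apply ds_star_appr; eauto].
  - apply ds_star_proj; auto.
Qed.

Lemma ipar_ist : forall a b, ipar a b -> ist a b.
Proof. induction 1; constructor; auto using par_dist. Qed.

Lemma ist_trans : forall a b, ist a b -> forall c, ist b c -> ist a c.
Proof.
  induction 1; intros d Hc; inversion Hc; subst; constructor; try (eapply rt_trans; eassumption); eauto.
Qed.

Lemma hs_app : forall a b c, hs a b -> hs (App a c) (App b c).
Proof. induction 1; [apply rt_step; apply h_app; auto | apply rt_refl | eapply rt_trans; eauto]. Qed.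
Lemma hs_proj : forall c a b, hs a b -> hs (Proj c a) (Proj c b).
Proof. induction 1; [apply rt_step; apply h_proj; auto | apply rt_refl | eapply rt_trans; eauto]. Qed.

Lemma h_subst : forall a b, h a b -> forall k N, h (subst k N a) (subst k N b).
Proof.
  induction 1; intros k N; simpl; try (constructor; auto; fail).
  destruct H; simpl; try (constructor; constructor; fail).
  unfold subst0. rewrite subst_subst by lia. simpl. constructor. constructor.
Qed.

Lemma hs_subst : forall a b, hs a b -> forall k N, hs (subst k N a) (subst k N b).
Proof.
  induction 1; intros k N; [apply rt_step; apply h_subst; auto | apply rt_refl | eapply rt_trans; [apply IHclos_refl_trans1 | apply IHclos_refl_trans2]].
Qed.

Definition fact a b := exists c, hs a c /\ ipar c b.

Lemma fact_subst : forall L P, ipar L P -> forall k N N', par N N' -> fact N N' ->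
  fact (subst k N L) (subst k N' P).
Proof.
  induction 1; intros k N N' HN HF; simpl.
  - destruct (Nat.compare n k); auto.
    + exists (Var n); split; [apply rt_refl | apply ipar_var].
    + exists (Var (pred n)); split; [apply rt_refl | apply ipar_var].
  - eexists; split; [apply rt_refl|]. constructor. apply par_subst; auto using par_lift.
  - eexists; split; [apply rt_refl|]. constructor; apply par_subst; auto.
  - destruct (IHipar k N N' HN HF) as [c [H1 H2]].
    exists (App c (subst k N u)); split; [apply hs_app; auto|].
    constructor; auto. apply par_subst; auto.
  - destruct (IHipar k N N' HN HF) as [c [H1 H2]].
    exists (Proj b c); split; [apply hs_proj; auto| constructor; auto].
Qed.

Lemma h1 : forall a b, top_step a b -> hs a b.
Proof. intros; apply rt_step; constructor; auto. Qed.

Lemma par_fact : forall a b, par a b -> fact a b.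
Proof.
  induction 1.
  - exists (Var n); split; [apply rt_refl | constructor].
  - exists (Lam t); split; [apply rt_refl | constructor; auto].
  - destruct IHpar1 as [c [H1 H2]].
    exists (App c u); split; [apply hs_app; auto | constructor; auto].
  - exists (Pair t u); split; [apply rt_refl | constructor; auto].
  - destruct IHpar as [c [H1 H2]].
    exists (Proj b c); split; [apply hs_proj; auto | constructor; auto].
  - destruct IHpar1 as [c [H1 H2]].
    destruct (fact_subst c t' H2 0 u u' H0 IHpar2) as [d [H3 H4]].
    exists d; split; auto.
    eapply rt_trans; [apply h1; constructor|].
    eapply rt_trans; [apply hs_subst; eauto| exact H3].
  - destruct IHpar as [c [H1 H2]]. exists c; split; auto.
    eapply rt_trans; [apply h1; constructor| auto].
  - destruct IHpar as [c [H1 H2]]. exists c; split; auto.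
    eapply rt_trans; [apply h1; constructor| auto].
  - eexists; split; [apply h1; constructor|]. constructor; constructor; auto.
  - eexists; split; [apply h1; constructor|]. constructor; constructor; auto.
Qed.

Ltac inv_ipar := repeat match goal with Hx : ipar ?a ?b |- _ =>
  is_var a; tryif is_var b then fail else (inversion Hx; subst; clear Hx) end.

Lemma postpone : forall b c, h b c -> forall a, ipar a b -> exists d, hs a d /\ par d c.
Proof.
  induction 1; intros a Ha.
  - destruct H; inv_ipar.
    + eexists; split; [apply h1; constructor|]. apply par_subst; auto.
    + eexists; split; [apply h1; constructor|]. auto.
    + eexists; split; [apply h1; constructor|]. auto.
    + eexists; split; [apply h1; constructor|]. constructor; constructor; auto using ipar_par.
    + eexists; split; [apply h1; constructor|]. constructor; constructor; auto using ipar_par.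
  - inversion Ha; subst.
    match goal with Hx : ipar _ t |- _ => destruct (IHh _ Hx) as [d [Hd1 Hd2]] end.
    eexists; split; [apply hs_app; eauto | constructor; eauto].
  - inversion Ha; subst.
    match goal with Hx : ipar _ t |- _ => destruct (IHh _ Hx) as [d [Hd1 Hd2]] end.
    eexists; split; [apply hs_proj; eauto | constructor; eauto].
Qed.

Lemma L : forall t1 u1, clos_refl_trans_1n term h t1 u1 -> forall e, ipar e t1 ->
  exists y, hs e y /\ ipar y u1.
Proof.
  induction 1; intros e He.
  - exists e; split; [apply rt_refl | auto].
  - destruct (postpone _ _ H e He) as [d [H1 H2]].
    destruct (par_fact _ _ H2) as [e' [H3 H4]].
    destruct (IHclos_refl_trans_1n e' H4) as [yy [H5 H6]].
    exists yy; split; auto. eapply rt_trans; [exact H1|]. eapply rt_trans; eauto.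
Qed.

Lemma F : forall t s, clos_refl_trans_1n term par t s -> exists u, hs t u /\ ist u s.
Proof.
  induction 1.
  - exists x. split; [apply rt_refl|].
    induction x; constructor; auto; apply rt_refl.
  - destruct IHclos_refl_trans_1n as [u1 [H1 H2]].
    destruct (par_fact _ _ H) as [e [H3 H4]].
    destruct (L y u1 (clos_rt_rt1n _ _ _ _ H1) e H4) as [w [H5 H6]].
    exists w; split; [eapply rt_trans; eauto|].
    eapply ist_trans; [apply ipar_ist; eauto | auto].
Qed.

Lemma dist_star_par : forall a b, dist_star a b -> clos_refl_trans_1n term par a b.
Proof.
  intros a b H. apply clos_rt_rt1n.
  induction H; [apply rt_step; apply dist_par; auto | apply rt_refl | eapply rt_trans; eauto].
Qed.

Lemma h_neutral : forall a b, h a b -> neutral a.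
Proof. induction 1; simpl; auto. destruct H; simpl; auto. Qed.

Lemma h_lo : forall a b, h a b -> lo_step a b.
Proof.
  induction 1.
  - destruct H; constructor.
  - apply lo_appl; auto. eapply h_neutral; eauto.
  - apply lo_proj; auto.
Qed.

Lemma hs_lo : forall a b, hs a b -> lo_star a b.
Proof. induction 1; [apply rt_step; apply h_lo; auto | apply rt_refl | eapply rt_trans; eauto]. Qed.

Lemma lo_neutral_back : forall a b, lo_step a b -> neutral b -> neutral a.
Proof. induction 1; simpl; auto. Qed.

Lemma los_neutral_back : forall a b, lo_star a b -> neutral b -> neutral a.
Proof. induction 1; eauto using lo_neutral_back. Qed.

Lemma los_appl : forall a b c, lo_star a b -> neutral b -> lo_star (App a c) (App b c).
Proof.
  intros a b c H Hn. apply clos_rt_rt1n in H. induction H.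
  - apply rt_refl.
  - assert (Hx : neutral x) by (eapply lo_neutral_back; [exact H| eapply los_neutral_back; [apply clos_rt1n_rt; exact H0 | exact Hn]]).
    eapply rt_trans; [apply rt_step; apply lo_appl; [exact H | exact Hx] | apply IHclos_refl_trans_1n; exact Hn].
Qed.
Lemma los_appr : forall a b c, lo_star a b -> neutral c -> normal c -> lo_star (App c a) (App c b).
Proof. intros a b c H Hn Hno; induction H; [apply rt_step; apply lo_appr; auto | apply rt_refl | eapply rt_trans; [apply IHclos_refl_trans1 | apply IHclos_refl_trans2]]. Qed.
Lemma los_lam : forall a b, lo_star a b -> lo_star (Lam a) (Lam b).
Proof. induction 1; [apply rt_step; apply lo_lam; auto | apply rt_refl | eapply rt_trans; eauto]. Qed.
Lemma los_proj : forall c a b, lo_star a b -> lo_star (Proj c a) (Proj c b).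
Proof. induction 1; [apply rt_step; apply lo_proj; auto | apply rt_refl | eapply rt_trans; eauto]. Qed.
Lemma los_pairl : forall a b c, lo_star a b -> lo_star (Pair a c) (Pair b c).
Proof. induction 1; [apply rt_step; apply lo_pairl; auto | apply rt_refl | eapply rt_trans; eauto]. Qed.
Lemma los_pairr : forall a b c, lo_star a b -> normal c -> lo_star (Pair c a) (Pair c b).
Proof. intros a b c H Hno; induction H; [apply rt_step; apply lo_pairr; auto | apply rt_refl | eapply rt_trans; [apply IHclos_refl_trans1 | apply IHclos_refl_trans2]]. Qed.

Theorem theorem2 : forall t s : term,
  dist_star t s -> normal s -> lo_star t s.
Proof.
  intros t s; revert t; induction s; intros t Hd Hn;
  destruct (F _ _ (dist_star_par _ _ Hd)) as [u [Hu Hi]];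
  (eapply rt_trans; [apply hs_lo; exact Hu|]); inversion Hi; subst.
  - apply rt_refl.
  - apply los_lam. apply IHs; auto. intros x Hx. apply (Hn (Lam x)). apply ds_lam; auto.
  - assert (N1 : normal s1) by (intros x Hx; apply (Hn (App x s2)); apply ds_appl; auto).
    assert (N2 : normal s2) by (intros x Hx; apply (Hn (App s1 x)); apply ds_appr; auto).
    assert (Ne : neutral s1).
    { destruct s1; simpl; auto.
      - apply (Hn (subst0 s2 s1)). do 2 constructor.
      - apply (Hn (Pair (App s1_1 s2) (App s1_2 s2))). do 2 constructor. }
    eapply rt_trans; [apply los_appl; [apply IHs1; auto using ist_dist | auto]|].
    apply los_appr; auto.
  - assert (N1 : normal s1) by (intros x Hx; apply (Hn (Pair x s2)); apply ds_pairl; auto).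
    assert (N2 : normal s2) by (intros x Hx; apply (Hn (Pair s1 x)); apply ds_pairr; auto).
    eapply rt_trans; [apply los_pairl; apply IHs1; auto|].
    apply los_pairr; auto.
  - apply los_proj. apply IHs; auto using ist_dist.
    intros x Hx. apply (Hn (Proj b x)). apply ds_proj; auto.
Qed.
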